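(* Let $(X,d_X)$ be a metric space, $\gamma\ge1$ and $d$ a positive integer with $\gamma_d(X)<\gamma<\infty$. Then for every $k\in\mathbb Z$, $X$ admits a $2^k$-bounded $\big(\frac1{100\gamma d^2},\frac1{d+1}\big)$-padded stochastic decomposition.
   Context: $X$ has Nagata dimension at most $d$ with constant $\gamma$ if for every $s>0$ there is a family $\mathscr C$ of nonempty subsets of $X$ covering $X$, with $\mathrm{diam}(C)\le\gamma s$ for all $C\in\mathscr C$, such that every $A\subseteq X$ with $\mathrm{diam}(A)\le s$ meets at most $d+1$ members of $\mathscr C$. $\gamma_d(X)$ is the infimum of such $\gamma$ ($\infty$ if none). For a partition $\mathscr P$ and $x\in X$, $\mathscr P(x)$ is the part containing $x$. A $\Delta$-bounded stochastic decomposition is a probability distribution over partitions of $X$ such that almost surely all parts have diameter $\le\Delta$; it is $(\varepsilon,\delta)$-padded if $\Pr[\mathscr P(x)\supseteq B_X(x,\varepsilon\Delta)]\ge\delta$ for every $x\in X$ ($B_X$ the closed ball). *)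

(* Defs.v *)
From HB Require Import structures.
From mathcomp Require Import all_boot all_order all_algebra.
From mathcomp Require Import all_classical all_reals all_analysis.
Set Implicit Arguments. Unset Strict Implicit. Unset Printing Implicit Defensive.
Import Order.TTheory GRing.Theory Num.Theory.
Local Open Scope classical_set_scope.
Local Open Scope ring_scope.

Section Defs.
Context {R : realType} {X : Type}.

Definition is_metric (dist : X -> X -> R) : Prop :=
  (forall x y, 0 <= dist x y) /\
  (forall x y, dist x y = 0 <-> x = y) /\
  (forall x y, dist x y = dist y x) /\
  (forall x y z, dist x z <= dist x y + dist y z).

Definition diam (dist : X -> X -> R) (A : set X) : \bar R :=
  ereal_sup [set (dist x y)%:E | x in A & y in A].

Definition closed_ball (dist : X -> X -> R) (x : X) (r : R) : set X :=
  [set y | dist x y <= r].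

Definition nagata_with (dist : X -> X -> R) (d : nat) (g : R) : Prop :=
  forall s : R, 0 < s ->
    exists F : set (set X),
      (forall C, F C -> C !=set0) /\
      (forall x, exists C, F C /\ C x) /\
      (forall C, F C -> (diam dist C <= (g * s)%:E)%E) /\
      (forall A : set X, (diam dist A <= s%:E)%E ->
         ([set C | F C /\ C `&` A !=set0] #<= `I_(d.+1))%card).

(* gamma_d(X): infimum of admissible constants (+oo if none) *)
Definition gamma_nagata (dist : X -> X -> R) (d : nat) : \bar R :=
  ereal_inf [set g%:E | g in nagata_with dist d].

Definition is_partition (P : set (set X)) : Prop :=
  (forall C, P C -> C !=set0) /\
  (forall C D, P C -> P D -> C `&` D !=set0 -> C = D) /\
  (forall x, exists C, P C /\ C x).

Definition part_of (P : set (set X)) (x : X) : set X :=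
  [set y | exists C, P C /\ C x /\ C y].

Definition padded_stoch_decomp (dist : X -> X -> R) (Delta eps delta : R) : Prop :=
  exists (disp : measure_display) (Omega : measurableType disp)
         (P : probability Omega R) (Part : Omega -> set (set X)),
    (forall w, is_partition (Part w)) /\
    {ae P, forall w, forall C, Part w C -> (diam dist C <= Delta%:E)%E} /\
    (forall x,
       measurable [set w | closed_ball dist x (eps * Delta) `<=` part_of (Part w) x] /\
       (delta%:E <= P [set w | closed_ball dist x (eps * Delta) `<=` part_of (Part w) x])%E).

End Defs.

(* Main.v *)
Require Import Defs.
From HB Require Import structures.
From mathcomp Require Import all_boot all_order all_algebra.
From mathcomp Require Import all_classical all_reals all_analysis.
From mathcomp.algebra_tactics Require Import ring lra.
Import Order.TTheory GRing.Theory Num.Theory.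
Section S1.
Local Open Scope classical_set_scope.
Local Open Scope ring_scope.
Section unif.
Context {R : realType}.
Variable N : nat.
Hypothesis N0 : (0 < N)%N.

Definition umu : measure nat R := msum (fun i : nat => (@dirac _ nat i R)) N.
Definition uP : probability nat R := mnormalize umu (@dirac _ nat 0%N R).

Lemma uPE (A : set nat) :
  uP A = ((\sum_(k < N) ((k : nat) \in A)%:R) / N%:R)%:E.
Proof.
have hT : umu setT = (N%:R)%:E.
  rewrite /umu /=; unfold msum.
  rewrite (eq_bigr (fun k : 'I_N => (1%:R)%:E)); last first.
    by move=> k _; rewrite /= diracE in_setT.
  by rewrite sumEFin sumr_const card_ord.
rewrite /uP /=; unfold mnormalize; rewrite hT /=.
have -> : ((N%:R)%:E == 0 :> \bar R) = false.
  by rewrite eqe pnatr_eq0; case: N N0.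
rewrite /= /umu /=; unfold msum.
rewrite (eq_bigr (fun k : 'I_N => ((k:nat) \in A)%:R%:E)); last first.
  by move=> k _; rewrite /= diracE.
by rewrite sumEFin -EFinM.
Qed.
End unif.
End S1.

Section S2.
Local Open Scope classical_set_scope.
Local Open Scope ring_scope.
Section geo.
Context {R : realType} {X : Type}.
Variable dist : X -> X -> R.
Hypothesis hm : is_metric dist.
Variable F : set (set X).

Definition Sset (t : R) (y : X) : set (set X) :=
  [set C | F C /\ exists c, C c /\ dist y c < t].
Definition cls (t : R) (y : X) : set X := [set z | Sset t z = Sset t y].
Definition Part (t : R) : set (set X) := [set K | exists y, K = cls t y].

Lemma tri x y z : dist x z <= dist x y + dist y z.
Proof. by case: hm => _ [_ [_ h]]. Qed.
Lemma dsym x y : dist x y = dist y x.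
Proof. by case: hm => _ [_ [h _]]. Qed.
Lemma d0 x : dist x x = 0.
Proof. by case: hm => _ [h _]; apply/h. Qed.

Lemma Part_partition t : is_partition (Part t).
Proof.
split; [|split].
- by move=> C [y ->]; exists y.
- move=> C D [y1 ->] [y2 ->] [z [h1 h2]].
  rewrite /cls in h1 h2 *; apply/seteqP; split => w /= ->.
    by rewrite -h1 h2.
  by rewrite -h2 h1.
- by move=> x; exists (cls t x); split; [exists x|].
Qed.

Lemma cls_part t x : cls t x `<=` part_of (Part t) x.
Proof. by move=> y hy; exists (cls t x); split; [exists x| split]. Qed.

Lemma Part_diam t G : 0 < t ->
  (forall x, exists C, F C /\ C x) ->
  (forall C, F C -> forall a b, C a -> C b -> dist a b <= G) ->
  forall K, Part t K -> (Defs.diam dist K <= (G + t)%:E)%E.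
Proof.
move=> t0 cov bnd K [y0 ->]; apply: ge_ereal_sup => _ [a ha [b hb <-]].
rewrite lee_fin.
have [C0 [FC0 C0a]] := cov a.
have : Sset t a C0 by split => //; exists a; rewrite d0.
rewrite /cls /= in ha hb; rewrite ha -hb => -[_ [c [C0c hc]]].
apply: (le_trans (tri a c b)); rewrite [dist c b]dsym.
by apply: lerD; [exact: bnd C0c | exact: ltW].
Qed.

Definition bad (x : X) (r t : R) (C : set X) :=
  (exists c, C c /\ dist x c < t + r) /\ ~ (exists c, C c /\ dist x c < t - r).

Lemma pad x r t : 0 <= r -> (forall C, F C -> ~ bad x r t C) ->
  Defs.closed_ball dist x r `<=` part_of (Part t) x.
Proof.
move=> r0 good y hy; apply: cls_part; rewrite /cls /=.
rewrite /Defs.closed_ball /= in hy.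
apply/seteqP; split => C [FC [c [Cc hc]]].
- split => //.
  have hx : dist x c < t + r.
    apply: (le_lt_trans (tri x y c)); rewrite addrC; exact: ltr_leD.
  have [[c' [Cc' hc']]|nex] := boolp.pselect (exists c', C c' /\ dist x c' < t - r); last first.
    by exfalso; apply: (good C FC); split => //; exists c.
  exists c'; split => //.
  by apply: (lt_le_trans hc'); rewrite lerBlDr lerDl.
- split => //.
  have hx : dist x c < t + r.
    by apply: (lt_le_trans hc); rewrite lerDl.
  have [[c' [Cc' hc']]|nex] := boolp.pselect (exists c', C c' /\ dist x c' < t - r); last first.
    by exfalso; apply: (good C FC); split => //; exists c.
  exists c'; split => //.
  apply: (le_lt_trans (tri y x c')); rewrite dsym.
  by rewrite -(subrK r t) addrC ltr_leD // dsym.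
Qed.

Lemma bad_uniq x r t1 t2 C : t1 + r <= t2 - r -> bad x r t1 C -> bad x r t2 C -> False.
Proof.
move=> ht [[c [Cc hc]] _] [_ hn]; apply: hn; exists c; split => //.
exact: lt_le_trans ht.
Qed.

End geo.
End S2.

Section S3.
Local Open Scope classical_set_scope.
Local Open Scope ring_scope.
Lemma count_bad {R : realType} {X : Type} (dist : X -> X -> R) (F : set (set X))
  x r (N d : nat) (t : nat -> R) (A : set X) :
  (forall i j, (i < j < N)%N -> t i + r <= t j - r) ->
  (forall i C, (i < N)%N -> F C -> bad dist x r (t i) C -> C `&` A !=set0) ->
  ([set C | F C /\ C `&` A !=set0] #<= `I_(d.+1))%card ->
  (#|[set i : 'I_N | ~~ `[< forall C, F C -> ~ bad dist x r (t i) C >]]%SET| <= d.+1)%N.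
Proof.
move=> ht hA /pcard_leP [f].
have hC : forall i : 'I_N, exists C, ~ (forall C, F C -> ~ bad dist x r (t i) C) ->
    F C /\ bad dist x r (t i) C.
  move=> i; have [[C [FC bC]]|nex] :=
    boolp.pselect (exists C, F C /\ bad dist x r (t i) C).
    by exists C.
  exists set0 => hn; exfalso; apply: hn => C FC bC; apply: nex; by exists C.
have [Cof hCof] := boolp.choice hC.
set Bd := ([set i : 'I_N | _]%SET).
pose phi (i : 'I_N) : 'I_(d.+1) := inord (f (Cof i)).
have inB i : i \in Bd -> F (Cof i) /\ bad dist x r (t i) (Cof i).
  rewrite inE =>  /asboolPn hn; exact: hCof.
have inA i : i \in Bd -> [set C | F C /\ C `&` A !=set0] (Cof i).
  move=> /inB [FC bC]; split => //; exact: hA (ltn_ord i) FC bC.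
have fS i : i \in Bd -> (f (Cof i) < d.+1)%N.
  by move=> /inA h; have /= := @funS _ _ _ _ f _ h.
have phi_inj : {in Bd &, injective phi}.
  move=> i j hi hj /(congr1 val); rewrite /phi /= !inordK ?fS //.
  move=> e; have e' : Cof i = Cof j.
    by apply: (@inj _ _ _ f); rewrite ?inE; [exact: inA|exact: inA|].
  apply/val_inj/eqP; rewrite eqn_leq; apply/negP => /negP.
  rewrite negb_and -!ltnNge => /orP [] lt.
  - have [_ bj] := inB j hj; have [_ bi] := inB i hi; rewrite -e' in bj.
    apply: (@bad_uniq _ _ dist x r (t j) (t i) (Cof i) _ bj bi); apply: ht; by rewrite lt ltn_ord.
  - have [_ bj] := inB j hj; have [_ bi] := inB i hi; rewrite -e' in bj.
    apply: (@bad_uniq _ _ dist x r (t i) (t j) (Cof i) _ bi bj); apply: ht; by rewrite lt ltn_ord.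
rewrite -(card_in_imset phi_inj).
by apply: leq_trans (max_card _) _; rewrite card_ord.
Qed.
End S3.

Local Open Scope ring_scope.

Theorem lemma5p2 (R : realType) (X : Type) (dist : X -> X -> R)
  (hmetric : is_metric dist) (g : R) (d : nat)
  (hg1 : 1 <= g) (hd : (0 < d)%N)
  (hgamma : (gamma_nagata dist d < g%:E)%E) :
  forall k : int,
    padded_stoch_decomp dist ((2 : R) ^ k)
      (1 / (100 * g * (d%:R) ^+ 2)) (1 / (d.+1)%:R).
Proof.
move=> k.
set Dl := (2 : R) ^ k.
have Dl0 : 0 < Dl by apply: exprz_gt0.
set D := (d%:R : R).
have D1 : 1 <= D by rewrite /D ler1n.
have D0 : 0 < D by apply: lt_le_trans D1.
have g0 : 0 < g by apply: lt_le_trans hg1.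
set eps := 1 / (100 * g * D ^+ 2).
set r := eps * Dl.
have hDl : Dl = 100 * g * D ^+ 2 * r.
  rewrite /r /eps; field.
  by rewrite pnatr_eq0 -lt0n hd gt_eqF.
have r0 : 0 < r.
  by rewrite /r /eps mulr_gt0 // divr_gt0 // !mulr_gt0 ?exprn_gt0.
have [_ [g' ng' <-] g'g] := ereal_inf_lt hgamma.
rewrite lte_fin in g'g.
set s := 50 * D * r.
have s0 : 0 < s by rewrite /s; apply: mulr_gt0 => //; apply: mulr_gt0 => //; lra.
have [Fc [Fne [Fcov [Fdiam Fcard]]]] := ng' s s0.
set N := (2 * d.+1)%N.
have N0 : (0 < N)%N by [].
have NR : (N%:R : R) = 2 * (D + 1) by rewrite /N natrM -addn1 natrD /D; lra.
set h := 2 * r.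
pose t (w : nat) : R := ((w %% N).+1)%:R * h.
have tpos w : 0 < t w by rewrite /t mulr_gt0 // /h; lra.
have tle w : t w <= N%:R * h.
  by rewrite /t ler_wpM2r ?ler_nat ?ltn_pmod // /h; lra.
have A1 : g * s + N%:R * h <= Dl.
  rewrite NR hDl /s /h.
  have gDr : 0 < g * D * r by apply: mulr_gt0 => //; apply: mulr_gt0.
  have e1 : 50 * g * D * r <= 50 * g * D ^+ 2 * r.
    have : 0 <= g * D * r * (D - 1) by apply: mulr_ge0; [exact: ltW|lra].
    rewrite expr2; nra.
  have e2 : 4 * (D + 1) * r <= 50 * g * D ^+ 2 * r.
    rewrite ler_pM2r // expr2.
    have : 1 <= g * D by rewrite -[1]mulr1 ler_pM.
    have : D <= D * D by rewrite ler_peMl // (le_trans _ D1).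
    nra.
  lra.
have A2 : 2 * (N%:R * h + r) <= s.
  rewrite NR /s /h; nra.
exists default_measure_display, nat, (uP N), (fun w => Part dist Fc (t w)).
split; [|split].
- move=> w; exact: Part_partition.
- apply: aeW => w C hC.
  apply: le_trans; first apply: (@Part_diam _ _ dist hmetric Fc (t w) (g * s) (tpos w) _ _ C hC).
  + by move=> x; have [C' [? ?]] := Fcov x; exists C'.
  + move=> C' FC' a b Ca Cb; apply: (@le_trans _ _ (g' * s)); last first.
      by rewrite ler_pM2r // ltW.
    rewrite -lee_fin; apply: le_trans (Fdiam C' FC').
    by apply: ereal_sup_ubound; exists a => //; exists b.
  + rewrite lee_fin; apply: le_trans A1; rewrite lerD2l; exact: tle.
- move=> x; split; first by [].
  set E := [set w | _]%classic.
  rewrite uPE //.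
  set Bd := [set i : 'I_N | ~~ `[< forall C, Fc C -> ~ bad dist x r (t i) C >]]%SET.
  pose A := [set c | dist x c < N%:R * h + r]%classic.
  have cB : (#|Bd| <= d.+1)%N.
    apply: (@count_bad _ _ dist Fc x r N d t A).
    + move=> i j /andP [ij jN].
      have iN : (i < N)%N by apply: ltn_trans jN.
      rewrite /t !modn_small //.
      have : ((i.+1)%:R + 1 : R) <= (j.+1)%:R.
        by rewrite natr1 ler_nat.
      rewrite /h => hij; nra.
    + move=> i C iN FC [[c [Cc hc]] _]; exists c; split => //.
      rewrite /A /=; apply: (lt_le_trans hc); rewrite lerD2r; exact: tle.
    + apply: Fcard; apply: ge_ereal_sup => _ [a ha [b hb <-]].
      rewrite lee_fin; apply: le_trans A2.
      apply: (le_trans (@tri _ _ dist hmetric a x b)); rewrite (@dsym _ _ dist hmetric a x).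
      rewrite /A /= in ha hb; lra.
  have sub (i : 'I_N) : i \notin Bd -> (i : nat) \in E.
    rewrite inE negbK => /asboolP good; rewrite in_setE /E /=.
    have -> : eps * Dl = r by [].
    by apply: pad => //; apply: ltW.
  have cardC : (d.+1 <= #|~: Bd|)%N.
    have := cardsC Bd; rewrite card_ord /N => e.
    rewrite -(leq_add2l #|Bd|) e; apply: leq_trans (leq_add cB (leqnn d.+1)) _.
    by rewrite mul2n -addnn.
  have sumge : (d.+1)%:R <= \sum_(k < N) (((k : nat) \in E)%:R : R).
    apply: (@le_trans _ _ (\sum_(k < N) ((k \notin Bd)%:R : R))).
      rewrite -natr_sum ler_nat; apply: leq_trans cardC _.
      rewrite -sum1_card big_mkcond /=; apply: leq_sum => i _.
      by rewrite inE; case: (i \in Bd).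
    apply: (@ler_sum R) => i _; case hi: (i \in Bd) => //=.
    by rewrite sub ?hi.
  rewrite lee_fin NR.
  have hd1 : ((d.+1)%:R : R) = D + 1 by rewrite -addn1 natrD.
  rewrite hd1 in sumge *.
  set S := \sum_(k < N) _ in sumge *.
  apply: (@le_trans _ _ ((D + 1) / (2 * (D + 1)))).
    have -> : (D + 1) / (2 * (D + 1)) = 1 / 2 by field; lra.
    rewrite !mul1r lef_pV2 ?posrE; lra.
  by rewrite ler_wpM2r // invr_ge0; lra.
Qed.
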